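(* Assume $\phi$ is convex and decreasing (i.e. $\phi(a)\ge\phi(b)$ whenever $a\le b$), and let $\mathbf{w}_{\mathrm{sup}}$ be a minimizer of $R_\phi$. Assume that for each $j=1,\dots,U$ the derivatives $\phi'(\mathbf{x}_{\mathrm{u},j}^\top\mathbf{w}_{\mathrm{sup}})$ and $\phi'(-\mathbf{x}_{\mathrm{u},j}^\top\mathbf{w}_{\mathrm{sup}})$ exist. Define $\mathbf{q}\in\mathbb{R}^U$ by $$q_j=\frac{\phi'(-\mathbf{x}_{\mathrm{u},j}^\top\mathbf{w}_{\mathrm{sup}})}{\phi'(\mathbf{x}_{\mathrm{u},j}^\top\mathbf{w}_{\mathrm{sup}})+\phi'(-\mathbf{x}_{\mathrm{u},j}^\top\mathbf{w}_{\mathrm{sup}})}$$ if the denominator is nonzero, and $q_j$ an arbitrary element of $[0,1]$ otherwise. Then $\mathbf{q}\in[0,1]^U$ and $\mathbf{w}_{\mathrm{sup}}$ is a minimizer of $R^{\mathrm{semi}}_\phi(\cdot,\mathbf{q})$. In particular $\mathbf{w}_{\mathrm{sup}}\in\mathcal{C}_\phi$.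
   Context: Fix integers $L,U,d\ge 1$. Let $\mathbf{X}\in\mathbb{R}^{L\times d}$ be a matrix whose rows $\mathbf{x}_1^\top,\dots,\mathbf{x}_L^\top$ are the labeled objects, with labels $\mathbf{y}\in\{-1,+1\}^L$. Let $\mathbf{X}_{\mathrm{u}}\in\mathbb{R}^{U\times d}$ be a matrix whose rows $\mathbf{x}_{\mathrm{u},1}^\top,\dots,\mathbf{x}_{\mathrm{u},U}^\top$ are the unlabeled objects. Let $\phi:\mathbb{R}\to\mathbb{R}$ be a loss function, $\Omega:\mathbb{R}^d\to\mathbb{R}$ a convex function and $\lambda\ge 0$. The supervised risk is $R_\phi(\mathbf{w})=\sum_{i=1}^L\phi(y_i\mathbf{x}_i^\top\mathbf{w})+\lambda\Omega(\mathbf{w})$. For responsibilities $\mathbf{q}\in[0,1]^U$ the semi-supervised risk is $R^{\mathrm{semi}}_\phi(\mathbf{w},\mathbf{q})=R_\phi(\mathbf{w})+\sum_{j=1}^U\big[q_j\phi(\mathbf{x}_{\mathrm{u},j}^\top\mathbf{w})+(1-q_j)\phi(-\mathbf{x}_{\mathrm{u},j}^\top\mathbf{w})\big]$. The constraint set is $\mathcal{C}_\phi=\{\mathbf{w}\in\mathbb{R}^d:\ \exists\,\mathbf{q}\in[0,1]^U \text{ such that } \mathbf{w} \text{ minimizes } R^{\mathrm{semi}}_\phi(\cdot,\mathbf{q})\}$. *)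

(* Defs.v *)
From Stdlib Require Import Reals.
From mathcomp Require Import ssreflect ssrfun ssrbool eqtype ssrnat fintype bigop.

Set Implicit Arguments.
Unset Strict Implicit.

Local Open Scope R_scope.

Definition vec (n : nat) := 'I_n -> R.

Definition dotp (n : nat) (x w : vec n) : R :=
  \big[Rplus/R0]_(k < n) (x k * w k).

Definition vadd (n : nat) (v w : vec n) : vec n := fun k => v k + w k.
Definition vscale (n : nat) (t : R) (v : vec n) : vec n := fun k => t * v k.

Definition convex_fun (f : R -> R) : Prop :=
  forall a b t, 0 <= t <= 1 -> f (t * a + (1 - t) * b) <= t * f a + (1 - t) * f b.

Definition convex_vfun (n : nat) (f : vec n -> R) : Prop :=
  forall v w t, 0 <= t <= 1 ->
    f (vadd (vscale t v) (vscale (1 - t) w)) <= t * f v + (1 - t) * f w.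

Definition decreasing_fun (f : R -> R) : Prop := forall a b, a <= b -> f b <= f a.

Definition is_minimizer (n : nat) (F : vec n -> R) (w : vec n) : Prop :=
  forall v, F w <= F v.

Definition Rsup (L d : nat) (X : 'I_L -> vec d) (y : 'I_L -> R)
  (phi : R -> R) (Omega : vec d -> R) (lambda : R) (w : vec d) : R :=
  \big[Rplus/R0]_(i < L) phi (y i * dotp (X i) w) + lambda * Omega w.

Definition Rsemi (L U d : nat) (X : 'I_L -> vec d) (y : 'I_L -> R)
  (Xu : 'I_U -> vec d) (phi : R -> R) (Omega : vec d -> R) (lambda : R)
  (q : 'I_U -> R) (w : vec d) : R :=
  Rsup X y phi Omega lambda w +
  \big[Rplus/R0]_(j < U) (q j * phi (dotp (Xu j) w)
                          + (1 - q j) * phi (- dotp (Xu j) w)).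

Definition Cset (L U d : nat) (X : 'I_L -> vec d) (y : 'I_L -> R)
  (Xu : 'I_U -> vec d) (phi : R -> R) (Omega : vec d -> R) (lambda : R)
  (w : vec d) : Prop :=
  exists q : 'I_U -> R, (forall j, 0 <= q j <= 1) /\
    is_minimizer (Rsemi X y Xu phi Omega lambda q) w.

(* Main.v *)
Require Import Defs.
From Stdlib Require Import Reals Lra.
From mathcomp Require Import ssreflect ssrfun ssrbool eqtype ssrnat fintype bigop.

Local Open Scope R_scope.

Lemma cvx_min (f : R -> R) t0 : convex_fun f -> derivable_pt_lim f t0 0 ->
  forall t, f t0 <= f t.
Proof.
move=> Hc Hd t.
destruct (Rle_or_lt (f t0) (f t)) as [H|H]; first by [].
exfalso.
have Htt : t - t0 <> 0.
  move=> E; have E' : t = t0 by lra.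
  by rewrite E' in H; lra.
set D := f t0 - f t.
have HD : 0 < D by rewrite /D; lra.
set a := Rabs (t - t0).
have Ha : 0 < a by apply Rabs_pos_lt.
have He : 0 < D / (2 * a) by apply Rdiv_lt_0_compat; lra.
destruct (Hd _ He) as [del Hdel].
have Hdp := cond_pos del.
set s := Rmin (1/2) (del / (2 * a)).
have Hs0 : 0 < s by apply Rmin_pos; [lra| apply Rdiv_lt_0_compat; lra].
have Hs1 : s <= 1/2 by apply Rmin_l.
have Hs2 : s <= del / (2 * a) by apply Rmin_r.
have Hsa : s * a <= del / 2.
  have : s * a <= del / (2 * a) * a by apply Rmult_le_compat_r; lra.
  have -> : del / (2 * a) * a = del / 2 by field; lra.
  done.
set h := s * (t - t0).
have Hh : h <> 0 by rewrite /h; apply Rmult_integral_contrapositive; split; lra.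
have Hah : Rabs h = s * a by rewrite /h Rabs_mult Rabs_right; [|lra].
have Hlt : Rabs h < del by lra.
have K := Hdel h Hh Hlt.
have Hs01 : 0 <= s <= 1 by lra.
have Hcv := Hc t t0 s Hs01.
have Eq : s * t + (1 - s) * t0 = t0 + h by rewrite /h; ring.
rewrite Eq in Hcv.
set u := f (t0 + h) - f t0.
have Hu : u <= - (s * D) by rewrite /u /D; lra.
have HsD : 0 < s * D by apply Rmult_lt_0_compat.
have Hau : s * D <= Rabs u.
  rewrite Rabs_left1; lra.
rewrite Rminus_0_r -/u /Rdiv Rabs_mult Rabs_inv Hah in K.
have Hsa0 : 0 < s * a by apply Rmult_lt_0_compat.
have K2 : Rabs u < D / (2 * a) * (s * a).
  have := Rmult_lt_compat_r (s * a) _ _ Hsa0 K.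
  have -> : Rabs u * / (s * a) * (s * a) = Rabs u by field; lra.
  done.
have E2 : D / (2 * a) * (s * a) = s * D / 2 by field; lra.
rewrite E2 in K2.
have : 0 < s * D by apply Rmult_lt_0_compat.
lra.
Qed.

Lemma dec_deriv (f : R -> R) t l : decreasing_fun f -> derivable_pt_lim f t l -> l <= 0.
Proof.
move=> Hdec Hd.
destruct (Rle_or_lt l 0) as [H|H]; first by [].
exfalso.
have He : 0 < l / 2 by lra.
destruct (Hd _ He) as [del Hdel].
have Hdp := cond_pos del.
set h := del / 2.
have Hh : h <> 0 by rewrite /h; lra.
have Hlt : Rabs h < del by rewrite /h Rabs_right; lra.
have K := Hdel h Hh Hlt.
have Hm := Hdec t (t + h) ltac:(rewrite /h; lra).
have Hq : (f (t + h) - f t) / h <= 0.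
  have Hi : 0 <= / h by apply Rlt_le, Rinv_0_lt_compat; rewrite /h; lra.
  have := Rmult_le_compat_r (/ h) (f (t + h) - f t) 0 Hi ltac:(lra).
  by rewrite Rmult_0_l.
move: K; rewrite Rabs_left1; lra.
Qed.

Theorem lemma2 (L U d : nat) (X : 'I_L -> vec d) (y : 'I_L -> R)
  (Xu : 'I_U -> vec d) (phi : R -> R) (Omega : vec d -> R) (lambda : R)
  (Hy : forall i, y i = 1 \/ y i = -1)
  (HOmega : convex_vfun Omega) (Hlambda : 0 <= lambda)
  (Hconv : convex_fun phi) (Hdec : decreasing_fun phi)
  (wsup : vec d) (Hmin : is_minimizer (Rsup X y phi Omega lambda) wsup)
  (dp dm : 'I_U -> R)
  (Hdp : forall j, derivable_pt_lim phi (dotp (Xu j) wsup) (dp j))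
  (Hdm : forall j, derivable_pt_lim phi (- dotp (Xu j) wsup) (dm j))
  (q : 'I_U -> R)
  (Hq1 : forall j, dp j + dm j <> 0 -> q j = dm j / (dp j + dm j))
  (Hq2 : forall j, dp j + dm j = 0 -> 0 <= q j <= 1) :
  (forall j, 0 <= q j <= 1) /\
  is_minimizer (Rsemi X y Xu phi Omega lambda q) wsup /\
  Cset X y Xu phi Omega lambda wsup.
Proof.
have Sp : forall j, dp j <= 0 by move=> j; exact: dec_deriv (Hdp j).
have Sm : forall j, dm j <= 0 by move=> j; exact: dec_deriv (Hdm j).
have Hq : forall j, 0 <= q j <= 1.
  move=> j; destruct (Req_dec (dp j + dm j) 0) as [E|E]; first by apply Hq2.
  rewrite (Hq1 j E).
  have Hn : dp j + dm j < 0 by have := Sp j; have := Sm j; lra.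
  split.
  - have -> : dm j / (dp j + dm j) = (- dm j) * / (- (dp j + dm j)) by field; lra.
    apply Rmult_le_pos; [have := Sm j; lra| apply Rlt_le, Rinv_0_lt_compat; lra].
  - apply (Rmult_le_reg_r (- (dp j + dm j))); first lra.
    have -> : dm j / (dp j + dm j) * - (dp j + dm j) = - dm j by field; lra.
    have := Sp j; lra.
have Hterm : forall j v,
   q j * phi (dotp (Xu j) wsup) + (1 - q j) * phi (- dotp (Xu j) wsup)
   <= q j * phi (dotp (Xu j) v) + (1 - q j) * phi (- dotp (Xu j) v).
  move=> j v.
  set g := fun t => q j * phi t + (1 - q j) * phi (- t).
  have Hg : convex_fun g.
    move=> a b s Hs; rewrite /g.
    have -> : - (s * a + (1 - s) * b) = s * (- a) + (1 - s) * (- b) by ring.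
    have H1 := Hconv a b s Hs.
    have H2 := Hconv (- a) (- b) s Hs.
    have Q := Hq j.
    have H1' := Rmult_le_compat_l (q j) _ _ (proj1 Q) H1.
    have H2' := Rmult_le_compat_l (1 - q j) _ _ ltac:(lra) H2.
    lra.
  have Dg : derivable_pt_lim g (dotp (Xu j) wsup)
             (q j * dp j + (1 - q j) * (dm j * -1)).
    rewrite /g; apply derivable_pt_lim_plus.
    - apply derivable_pt_lim_scal; exact: Hdp.
    - apply derivable_pt_lim_scal.
      apply (derivable_pt_lim_comp (fun t => - t) phi).
      + apply derivable_pt_lim_opp, derivable_pt_lim_id.
      + exact: Hdm.
  have Z : q j * dp j + (1 - q j) * (dm j * -1) = 0.
    destruct (Req_dec (dp j + dm j) 0) as [E|E].
    - have : dp j = 0 by have := Sp j; have := Sm j; lra.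
      have : dm j = 0 by have := Sp j; have := Sm j; lra.
      move=> -> ->; ring.
    - rewrite (Hq1 j E); field; exact E.
  rewrite Z in Dg.
  have := cvx_min _ _ Hg Dg (dotp (Xu j) v).
  by rewrite /g.
have Hmin2 : is_minimizer (Rsemi X y Xu phi Omega lambda q) wsup.
  move=> v; rewrite /Rsemi.
  apply Rplus_le_compat; first exact: Hmin.
  elim/big_ind2: _ => [|? ? ? ? ? ?|j _]; [exact: Rle_refl| exact: Rplus_le_compat| exact: Hterm].
split; first exact Hq.
split; first exact Hmin2.
exists q; split; [exact Hq| exact Hmin2].
Qed.
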